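(* If $G$ and $H$ are graphs on the same vertex set $V$, and $G\cup H$ denotes the graph on $V$ with edge set $E(G)\cup E(H)$, then \[\bar{\vartheta}(G\cup H)\le\bar{\vartheta}(G)\,\bar{\vartheta}(H).\]
   Context: Graphs are finite, simple and undirected. For a real $k>1$, a strict vector $k$-coloring of $G$ is a map $\varphi$ from $V(G)$ to the unit sphere of some $\mathbb{R}^d$ with $\varphi(u)^T\varphi(v)=-\frac1{k-1}$ whenever $u\sim v$; $\bar{\vartheta}(G)$ is the infimum of such $k$, and equals $\vartheta(\overline{G})$, the Lovász theta function of the complement of $G$. *)

(* Defs.v *)
From HB Require Import structures.
From mathcomp Require Import all_boot all_order all_algebra.
From mathcomp Require Import boolp classical_sets reals.
Set Implicit Arguments. Unset Strict Implicit. Unset Printing Implicit Defensive.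
Import Order.TTheory GRing.Theory Num.Theory.
Local Open Scope ring_scope.
Local Open Scope classical_set_scope.

Definition simple_graph (V : finType) (e : rel V) : Prop :=
  symmetric e /\ irreflexive e.

Definition graph_union (V : finType) (G H : rel V) : rel V :=
  fun u v => G u v || H u v.

Definition dotv (R : realType) (d : nat) (x y : 'rV[R]_d) : R :=
  \sum_(i < d) x 0 i * y 0 i.

Definition strict_vector_coloring (R : realType) (V : finType) (G : rel V)
    (k : R) (d : nat) (phi : V -> 'rV[R]_d) : Prop :=
  (forall v, dotv (phi v) (phi v) = 1) /\
  (forall u v, G u v -> dotv (phi u) (phi v) = - (k - 1)^-1).

Definition theta_bar (R : realType) (V : finType) (G : rel V) : R :=
  inf [set k : R | 1 < k /\
        exists (d : nat) (phi : V -> 'rV[R]_d), strict_vector_coloring G k phi].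

(* Main.v *)
Require Import Defs.
From mathcomp Require Import all_boot all_order all_algebra.
From mathcomp Require Import boolp classical_sets reals.
From mathcomp Require Import ring lra zify.
Import Order.TTheory GRing.Theory Num.Theory.
Local Open Scope ring_scope.

Section S.
Variable R : realType.

Lemma dotvC d (x y : 'rV[R]_d) : dotv x y = dotv y x.
Proof. by apply: eq_bigr => i _; rewrite mulrC. Qed.
Arguments dotvC {d}.

Lemma dotvDl d (x y z : 'rV[R]_d) : dotv (x + y) z = dotv x z + dotv y z.
Proof. by rewrite /dotv -big_split; apply: eq_bigr => i _; rewrite mxE mulrDl. Qed.

Lemma dotvZl d a (x z : 'rV[R]_d) : dotv (a *: x) z = a * dotv x z.
Proof. by rewrite /dotv big_distrr; apply: eq_bigr => i _; rewrite !mxE -mulrA. Qed.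

Lemma dotvZr d a (x z : 'rV[R]_d) : dotv x (a *: z) = a * dotv x z.
Proof. by rewrite dotvC dotvZl dotvC. Qed.

Lemma dotvNl d (x z : 'rV[R]_d) : dotv (- x) z = - dotv x z.
Proof. by rewrite -scaleN1r dotvZl mulN1r. Qed.

Lemma dotv_row m n (x x' : 'rV[R]_m) (y y' : 'rV[R]_n) :
  dotv (row_mx x y) (row_mx x' y') = dotv x x' + dotv y y'.
Proof.
rewrite /dotv big_split_ord /=; congr (_ + _); apply: eq_bigr => i _.
  by rewrite !row_mxEl.
by rewrite !row_mxEr.
Qed.

Lemma dotv_tens m n (x x' : 'rV[R]_m) (y y' : 'rV[R]_n) :
  dotv (mxvec (x^T *m y)) (mxvec (x'^T *m y')) = dotv x x' * dotv y y'.
Proof.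
rewrite /dotv (reindex _ (curry_mxvec_bij _ _)) /= big_distrl /=.
under [RHS]eq_bigr do rewrite big_distrr.
rewrite pair_bigA; apply: eq_bigr => [[i j]] _ /=.
rewrite !mxvecE !mxE !big_ord1 !mxE; ring.
Qed.

Definition SC {V : finType} (G : rel V) : set R :=
  [set k : R | 1 < k /\
        exists (d : nat) (phi : V -> 'rV[R]_d), strict_vector_coloring G k phi].

Lemma SC_prod (V : finType) (G H : rel V) k l :
  SC G k -> SC H l -> SC (graph_union G H) (k * l).
Proof.
move=> [k1 [d1 [phi [phin phie]]]] [l1 [d2 [psi [psin psie]]]].
have kl1 : 1 < k * l by rewrite -[1]mulr1; apply: ltr_pM => //; lra.
split=> //.
set s := Num.sqrt ((k * l - 1)^-1).
set a := Num.sqrt (l - 1). set b := Num.sqrt (k - 1).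
have s2 : s * s = (k * l - 1)^-1 by rewrite -expr2 sqr_sqrtr // invr_ge0; lra.
have a2 : a * a = l - 1 by rewrite -expr2 sqr_sqrtr //; lra.
have b2 : b * b = k - 1 by rewrite -expr2 sqr_sqrtr //; lra.
exists (d2 + (d1 + d1 * d2))%N.
exists (fun v => s *: row_mx (a *: psi v) (row_mx (b *: phi v)
                    ((a * b) *: mxvec ((phi v)^T *m psi v)))).
have key : forall u v, dotv (s *: row_mx (a *: psi u) (row_mx (b *: phi u)
                    ((a * b) *: mxvec ((phi u)^T *m psi u))))
    (s *: row_mx (a *: psi v) (row_mx (b *: phi v)
                    ((a * b) *: mxvec ((phi v)^T *m psi v)))) =
   (s * s) * ((a * a) * dotv (psi u) (psi v) + (b * b) * dotv (phi u) (phi v)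
     + (a * a) * (b * b) * (dotv (phi u) (phi v) * dotv (psi u) (psi v))).
  move=> u v; rewrite dotvZl dotvZr !dotv_row !(dotvZl, dotvZr) dotv_tens; ring.
split.
  move=> v; rewrite key phin psin s2 a2 b2.
  by field; do ?[apply/andP; split]; apply/eqP; lra.
move=> u v; rewrite /graph_union => /orP [] e.
  rewrite key (phie _ _ e) s2 a2 b2.
  by field; do ?[apply/andP; split]; apply/eqP; lra.
rewrite key (psie _ _ e) s2 a2 b2.
by field; do ?[apply/andP; split]; apply/eqP; lra.
Qed.

Lemma dotvDr d (x y z : 'rV[R]_d) : dotv z (x + y) = dotv z x + dotv z y.
Proof. by rewrite dotvC dotvDl !(dotvC z). Qed.

Lemma dotvNr d (x z : 'rV[R]_d) : dotv z (- x) = - dotv z x.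
Proof. by rewrite dotvC dotvNl dotvC. Qed.

Lemma dot_delta d (i j : 'I_d) :
  dotv (delta_mx 0 i) (delta_mx 0 j) = (i == j)%:R :> R.
Proof.
rewrite /dotv (bigD1 i) //= big1 => [|k /negbTE ki]; last by rewrite !mxE ki mul0r.
rewrite !mxE !eqxx /= mul1r addr0; by case: (i == j).
Qed.

Lemma dot_delta1 d (i : 'I_d) :
  dotv (delta_mx 0 i) (const_mx 1) = 1 :> R.
Proof.
rewrite /dotv (bigD1 i) //= big1 => [|k /negbTE ki]; last by rewrite !mxE ki mul0r.
by rewrite !mxE !eqxx /= mul1r addr0.
Qed.

Lemma dot11 d : dotv (const_mx 1 : 'rV[R]_d) (const_mx 1) = d%:R.
Proof.
rewrite /dotv (eq_bigr (fun _ => 1)) => [|i _]; last by rewrite !mxE mulr1.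
by rewrite sumr_const card_ord.
Qed.

Lemma SC_nonempty (V : finType) (G : rel V) : irreflexive G -> exists k, SC G k.
Proof.
move=> irr.
pose N := #|V|.+2.
have hN : (#|V| <= N)%N by rewrite /N; lia.
pose e (v : V) : 'rV[R]_N := delta_mx 0 (widen_ord hN (enum_rank v)).
pose w : 'rV[R]_N := const_mx 1.
have N2 : 2 <= N%:R :> R by rewrite (ler_nat R 2 N) /N; lia.
pose s : R := Num.sqrt ((1 - N%:R^-1)^-1).
have s2 : s * s = (1 - N%:R^-1)^-1.
  rewrite -expr2 sqr_sqrtr // invr_ge0 subr_ge0 invf_le1; lra.
have key : forall u v, dotv (s *: (e u - N%:R^-1 *: w)) (s *: (e v - N%:R^-1 *: w))
   = (s * s) * ((u == v)%:R - N%:R^-1).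
  move=> u v; rewrite !(dotvZl, dotvZr, dotvDl, dotvDr, dotvNl, dotvNr).
  rewrite dot_delta (dotvC w) /w !dot_delta1 dot11.
  have -> : (widen_ord hN (enum_rank u) == widen_ord hN (enum_rank v)) = (u == v).
    apply/eqP/eqP => [h|->] //; apply: enum_rank_inj; apply: val_inj.
    by move: h => /(congr1 val).
  by field; apply/eqP; lra.
exists N%:R; split; first lra.
exists N, (fun v => s *: (e v - N%:R^-1 *: w)); split.
  move=> v; rewrite key eqxx /= s2; by field; do ?[apply/andP; split]; apply/eqP; lra.
move=> u v huv; have uv : (u == v) = false.
  by apply/negbTE/eqP => h; move: huv; rewrite h irr.
rewrite key uv /= s2; by field; do ?[apply/andP; split]; apply/eqP; lra.
Qed.

Lemma SC_ge1 (V : finType) (G : rel V) : lbound (SC G) 1.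
Proof. by move=> k [/ltW]. Qed.

Lemma SC_main (V : finType) (G H : rel V) : irreflexive G -> irreflexive H ->
  inf (SC (graph_union G H)) <= inf (SC G) * inf (SC H).
Proof.
move=> iG iH.
have iGH : @irreflexive V (graph_union G H) by move=> v; rewrite /graph_union iG iH.
have [k0 Hk0] := SC_nonempty _ _ iG.
have [l0 Hl0] := SC_nonempty _ _ iH.
have lbGH : has_lbound (SC (graph_union G H)) by exists 1; exact: SC_ge1.
have a1 : 1 <= inf (SC G) by apply: lb_le_inf; [exists k0 | exact: SC_ge1].
have b1 : 1 <= inf (SC H) by apply: lb_le_inf; [exists l0 | exact: SC_ge1].
set t := inf _.
have step1 : forall k, SC G k -> t / k <= inf (SC H).
  move=> k Hk; have k0' : 0 < k by case: Hk => ? _; lra.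
  apply: lb_le_inf; first by exists l0.
  move=> l Hl; rewrite ler_pdivrMr //.
  by rewrite mulrC; apply: (ge_inf lbGH); apply: SC_prod.
have step2 : t / inf (SC H) <= inf (SC G).
  apply: lb_le_inf; first by exists k0.
  move=> k Hk; have k0' : 0 < k by case: Hk => ? _; lra.
  rewrite ler_pdivrMr; last lra.
  by rewrite mulrC -ler_pdivrMr //; apply: step1.
by move: step2; rewrite ler_pdivrMr; last lra.
Qed.

End S.

Theorem corollary4p5 (R : realType) (V : finType) (G H : rel V) :
  simple_graph G -> simple_graph H ->
  theta_bar R (graph_union G H) <= theta_bar R G * theta_bar R H.
Proof.
move=> [_ iG] [_ iH]; exact: (@SC_main R V G H iG iH).
Qed.
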